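(* The algebra $\mathcal{A}$ equals the algebra of (noncommutative) polynomials in $U$, $U^{-1}$, $P_{\ge0}$ and $P_0$.
   Context: Let $\{E_k\}_{k\in\mathbb{Z}}$ be the canonical basis of $\ell^2(\mathbb{Z})$, $UE_k=E_{k+1}$, $\mathbb{K}E_k=kE_k$, and $a(\mathbb{K})E_k=a(k)E_k$ for $a:\mathbb{Z}\to\mathbb{C}$. A function $a:\mathbb{Z}\to\mathbb{C}$ is eventually constant if there is $k_0$ such that $a$ is constant on $\{k\ge k_0\}$ and constant on $\{k\le-k_0\}$ (the two constants may differ). $\mathcal{A}$ is the set of finite sums $\sum_nU^na_n(\mathbb{K})$ with each $a_n$ eventually constant. $P_0$ is the orthogonal projection onto $\mathrm{span}\{E_0\}$ and $P_{\ge0}$ the orthogonal projection onto $\overline{\mathrm{span}}\{E_k:k\ge0\}$. *)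

(* Defs.v *)
From HB Require Import structures.
From mathcomp Require Import all_boot all_order all_algebra.
From mathcomp Require Import complex.
From mathcomp Require Import reals.
Set Implicit Arguments. Unset Strict Implicit. Unset Printing Implicit Defensive.
Import Order.TTheory GRing.Theory Num.Theory.
Local Open Scope ring_scope.

Section Ops.
Variable R : realType.
Local Notation C := (R[i])%C.

(* Operators are represented by their action on all sequences Z -> C; on
   l^2(Z) each operator below acts by the same formula, and the operators in
   question are determined by their values on the basis vectors E_k. *)
Definition Op := (int -> C) -> (int -> C).

(* U^n for n : int, with U E_k = E_{k+1}, i.e. (U f)(k) = f(k-1). *)
Definition Upow (n : int) : Op := fun f k => f (k - n).
Definition Ushift : Op := Upow 1.
Definition Uinv : Op := Upow (-1).

Definition diagop (a : int -> C) : Op := fun f k => a k * f k.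

Definition P0 : Op := diagop (fun k => if k == 0 then 1 else 0).
Definition Pge0 : Op := diagop (fun k => if 0 <= k then 1 else 0).

Definition idop : Op := fun f => f.
Definition addop (S T : Op) : Op := fun f k => S f k + T f k.
Definition scaleop (c : C) (T : Op) : Op := fun f k => c * T f k.
Definition compop (S T : Op) : Op := fun f => S (T f).

Definition eventually_constant (a : int -> C) : Prop :=
  exists (k0 : int) (cplus cminus : C),
    forall k : int, (k0 <= k -> a k = cplus) /\ (k <= - k0 -> a k = cminus).

Definition in_A (T : Op) : Prop :=
  exists (ns : seq int) (a : int -> int -> C),
    (forall n, n \in ns -> eventually_constant (a n)) /\
    T = fun f k => \sum_(n <- ns) Upow n (diagop (a n) f) k.

Inductive in_poly_alg : Op -> Prop :=
| pa_id : in_poly_alg idop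
| pa_U : in_poly_alg Ushift
| pa_Uinv : in_poly_alg Uinv
| pa_Pge0 : in_poly_alg Pge0
| pa_P0 : in_poly_alg P0
| pa_add S T : in_poly_alg S -> in_poly_alg T -> in_poly_alg (addop S T)
| pa_scale c T : in_poly_alg T -> in_poly_alg (scaleop c T)
| pa_comp S T : in_poly_alg S -> in_poly_alg T -> in_poly_alg (compop S T).

End Ops.

(* Main.v *)
Require Import Defs.
From HB Require Import structures.
From mathcomp Require Import all_boot all_order all_algebra.
From mathcomp Require Import complex reals.
From mathcomp Require Import zify ring.
From Stdlib Require Import FunctionalExtensionality.
From Stdlib Require List.
Set Implicit Arguments. Unset Strict Implicit. Unset Printing Implicit Defensive.
Import Order.TTheory GRing.Theory Num.Theory.
Local Open Scope ring_scope.

Section Proof.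
Variable R : realType.
Local Notation C := (R[i])%C.
Local Notation ecR := (@eventually_constant R).

Definition flex (l : seq (int * (int -> C))) : Op R :=
  fun f k => \sum_(p <- l) p.2 (k - p.1) * f (k - p.1).

Definition allec (l : seq (int * (int -> C))) :=
  forall p, List.In p l -> ecR p.2.

Lemma opext (S T : Op R) : (forall f k, S f k = T f k) -> S = T.
Proof. move=> H; apply: functional_extensionality => f;
  apply: functional_extensionality => k; exact: H. Qed.

Lemma ec_norm (a : int -> C) : ecR a ->
  exists (N : nat) (cp cm : C), forall k : int,
    (N%:Z <= k -> a k = cp) /\ (k <= - N%:Z -> a k = cm).
Proof.
case=> k0 [cp [cm H]]; exists `|k0|%N, cp, cm => k; split => Hk.
  by apply: (proj1 (H k)); lia.
by apply: (proj2 (H k)); lia.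
Qed.

Lemma ec_add a b : ecR a -> ecR b ->
  ecR (fun k => a k + b k).
Proof.
move=> /ec_norm [N [cp [cm H]]] /ec_norm [M [dp [dm H']]].
exists (N + M)%:Z, (cp + dp), (cm + dm) => k; split => Hk.
  by rewrite (proj1 (H k)) ?(proj1 (H' k)) //; lia.
by rewrite (proj2 (H k)) ?(proj2 (H' k)) //; lia.
Qed.

Lemma ec_mul a b : ecR a -> ecR b ->
  ecR (fun k => a k * b k).
Proof.
move=> /ec_norm [N [cp [cm H]]] /ec_norm [M [dp [dm H']]].
exists (N + M)%:Z, (cp * dp), (cm * dm) => k; split => Hk.
  by rewrite (proj1 (H k)) ?(proj1 (H' k)) //; lia.
by rewrite (proj2 (H k)) ?(proj2 (H' k)) //; lia.
Qed.

Lemma ec_shift a (m : int) : ecR a ->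
  ecR (fun k => a (k + m)).
Proof.
move=> /ec_norm [N [cp [cm H]]].
exists (N + `|m|)%:Z, cp, cm => k; split => Hk.
  by rewrite (proj1 (H _)) //; lia.
by rewrite (proj2 (H _)) //; lia.
Qed.

Lemma ec_const c : ecR (fun _ : int => c).
Proof. by exists 0, c, c. Qed.

Lemma ec_sum (I : Type) (s : seq I) (P : pred I) (F : I -> int -> C) :
  (forall i, List.In i s -> ecR (F i)) ->
  ecR (fun k => \sum_(i <- s | P i) F i k).
Proof.
elim: s => [|i s IH] H.
  rewrite (_ : (fun k => _) = fun _ => 0); first exact: ec_const.
  by apply: functional_extensionality => k; rewrite big_nil.
rewrite (_ : (fun k => _) = fun k => if P i then F i k + \sum_(j <- s | P j) F j k
   else \sum_(j <- s | P j) F j k); last first.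
  by apply: functional_extensionality => k; rewrite big_cons.
have IH' := IH (fun j Hj => H j (or_intror Hj)).
case: (P i) => //; apply: ec_add => //; by apply: H; left.
Qed.

Lemma eq_big_In (I : Type) (s : seq I) (F G : I -> C) :
  (forall i, List.In i s -> F i = G i) -> \sum_(i <- s) F i = \sum_(i <- s) G i.
Proof.
elim: s => [|i s IH] H; first by rewrite !big_nil.
by rewrite !big_cons H /=; [rewrite IH // => j Hj; apply: H; right | left].
Qed.

Lemma In_map_fst (s : seq (int * (int -> C))) p :
  List.In p s -> p.1 \in [seq q.1 | q <- s].
Proof.
elim: s => //= q s IH [->|/IH]; rewrite in_cons ?eqxx //.
by move=> ->; rewrite orbT.
Qed.

Lemma A_to_flex T : in_A T -> exists l, allec l /\ T = flex l.
Proof.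
case=> ns [a [Hec ->]]; exists [seq (n, a n) | n <- ns]; split.
  move=> p /List.in_map_iff [n [<- Hn]]; apply: Hec.
  elim: ns Hn => //= m s IH [->|/IH]; rewrite in_cons ?eqxx //.
  by move=> ->; rewrite orbT.
by apply: opext => f k; rewrite /flex big_map.
Qed.

Lemma flex_to_A l : allec l -> in_A (flex l).
Proof.
move=> Hl.
exists (undup [seq p.1 | p <- l]),
  (fun n j => \sum_(p <- l | p.1 == n) p.2 j); split.
  by move=> n _; apply: ec_sum => p /Hl.
apply: opext => f k; rewrite /flex /Upow /diagop /=; symmetry.


under eq_bigr => n _ do rewrite mulr_suml.
have inner n : \sum_(p <- l | p.1 == n) p.2 (k - n) * f (k - n) =
  \sum_(p <- l | p.1 == n) p.2 (k - p.1) * f (k - p.1).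
  by apply: eq_bigr => p /eqP ->.
under eq_bigr => n _ do rewrite inner.
rewrite (exchange_big_dep xpredT) //=; apply: eq_big_In => p Hp.
rewrite big_const_seq.
have -> : count (fun n => p.1 == n) (undup [seq q.1 | q <- l]) = 1%N.
  rewrite (eq_count (a2 := pred1 p.1)); last by move=> n /=; rewrite eq_sym.
  rewrite count_uniq_mem ?undup_uniq // mem_undup.
  by rewrite In_map_fst.
by rewrite /= addr0.
Qed.

Definition inF (T : Op R) := exists l, allec l /\ T = flex l.

Lemma inF_diag0 (n : int) (a : int -> C) : ecR a ->
  inF (fun f k => a (k - n) * f (k - n)).
Proof.
move=> Ha; exists [:: (n, a)]; split.
  by move=> p [<-|[]].
by apply: opext => f k; rewrite /flex big_seq1.
Qed.

Lemma inF_gen (T : Op R) : (T = @idop R \/ T = @Ushift R \/ T = @Uinv R \/ T = @Pge0 R \/ T = @P0 R) ->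
  inF T.
Proof.
case=> [->|[->|[->|[->|->]]]].
- have -> : @idop R = (fun f k => (fun _ : int => 1 : C) (k - 0) * f (k - 0)).
    by apply: opext => f k; rewrite subr0 mul1r.
  exact: (inF_diag0 0 (ec_const 1)).
- have -> : @Ushift R = (fun f k => (fun _ : int => 1 : C) (k - 1) * f (k - 1)).
    by apply: opext => f k; rewrite mul1r.
  exact: (inF_diag0 1 (ec_const 1)).
- have -> : @Uinv R = (fun f k => (fun _ : int => 1 : C) (k - -1) * f (k - -1)).
    by apply: opext => f k; rewrite mul1r.
  exact: (inF_diag0 (-1) (ec_const 1)).
- have -> : @Pge0 R = (fun f k => (fun j : int => if 0 <= j then 1 else 0 : C) (k - 0) * f (k - 0)).
    by apply: opext => f k; rewrite subr0.
  apply: (inF_diag0 0 (a := fun j : int => if 0 <= j then 1 else 0 : C)); exists 1, 1, 0 => k; split => Hk.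
    by have -> : (0 <= k) = true by lia.
  by have -> : (0 <= k) = false by lia.
- have -> : @P0 R = (fun f k => (fun j : int => if j == 0 then 1 else 0 : C) (k - 0) * f (k - 0)).
    by apply: opext => f k; rewrite subr0.
  apply: (inF_diag0 0 (a := fun j : int => if j == 0 then 1 else 0 : C)); exists 1, 0, 0 => k; split => Hk.
    by have -> : (k == 0) = false by lia.
  by have -> : (k == 0) = false by lia.
Qed.

Lemma inF_add S T : inF S -> inF T -> inF (addop S T).
Proof.
move=> [l1 [H1 ->]] [l2 [H2 ->]]; exists (l1 ++ l2); split.
  by move=> p Hp; case: (List.in_app_or _ _ _ Hp) => [/H1|/H2].
by apply: opext => f k; rewrite /flex /addop big_cat.
Qed.

Lemma inF_scale c T : inF T -> inF (scaleop c T).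
Proof.
move=> [l [H ->]]; exists [seq (p.1, fun j => c * p.2 j) | p <- l]; split.
  move=> p /List.in_map_iff [q [<- Hq]]; apply: ec_mul; [exact: ec_const|].
  exact: H.
apply: opext => f k; rewrite /flex /scaleop big_map mulr_sumr.
by apply: eq_bigr => p _ /=; rewrite mulrA.
Qed.

Lemma In_allpairs (A B D : Type) (g : A -> B -> D) s t r :
  List.In r [seq g x y | x <- s, y <- t] ->
  exists x y, List.In x s /\ List.In y t /\ r = g x y.
Proof.
elim: s => //= x s IH Hr.
case: (List.in_app_or _ _ _ Hr).
  move=> H; case: (List.in_map_iff (g x) t r) => [H1 _].
  case: (H1 H) => y [<- Hy]; exists x, y; split; [left|split] => //.
move=> /IH [x' [y [Hx [Hy ->]]]]; exists x', y; split; [right|split] => //.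
Qed.

Lemma inF_comp S T : inF S -> inF T -> inF (compop S T).
Proof.
move=> [l1 [H1 ->]] [l2 [H2 ->]].
exists [seq (p.1 + q.1, fun j => p.2 (j + q.1) * q.2 j) | p <- l1, q <- l2]; split.
  move=> r Hr; case: (In_allpairs Hr) => [p [q [Hp [Hq ->]]]].
  apply: ec_mul; [apply: ec_shift; exact: H1 | exact: H2].
apply: opext => f k; rewrite /flex /compop big_allpairs_dep.
apply: eq_bigr => p _; rewrite mulr_sumr; apply: eq_bigr => q _ /=.
have -> : k - (p.1 + q.1) + q.1 = k - p.1 by ring.
have -> : k - (p.1 + q.1) = k - p.1 - q.1 by ring.
by rewrite mulrA.
Qed.

Lemma poly_inF T : in_poly_alg T -> inF T.
Proof.
elim=> {T}.
- by apply: inF_gen; left.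
- by apply: inF_gen; right; left.
- by apply: inF_gen; right; right; left.
- by apply: inF_gen; right; right; right; left.
- by apply: inF_gen; right; right; right; right.
- by move=> S T _ HS _ HT; apply: inF_add.
- by move=> c T _ HT; apply: inF_scale.
- by move=> S T _ HS _ HT; apply: inF_comp.
Qed.

Lemma poly_Upow_nat (m : nat) :
  in_poly_alg (@Upow R m%:Z) /\ in_poly_alg (@Upow R (- m%:Z)).
Proof.
elim: m => [|m [IH1 IH2]].
  have -> : @Upow R 0 = @idop R by apply: opext => f k; rewrite /Upow subr0.
  by split; apply: pa_id.
split.
  have -> : @Upow R m.+1%:Z = compop (@Ushift R) (@Upow R m%:Z).
    apply: opext => f k; rewrite /Upow /compop /Ushift /Upow; congr f; lia.
  by apply: pa_comp => //; apply: pa_U.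
have -> : @Upow R (- m.+1%:Z) = compop (@Uinv R) (@Upow R (- m%:Z)).
  apply: opext => f k; rewrite /Upow /compop /Uinv /Upow; congr f; lia.
by apply: pa_comp => //; apply: pa_Uinv.
Qed.

Lemma poly_Upow (n : int) : in_poly_alg (@Upow R n).
Proof.
case: n => m; first exact: (proj1 (poly_Upow_nat m)).
rewrite NegzE; exact: (proj2 (poly_Upow_nat m.+1)).
Qed.

Lemma delta_eq (j : int) (c : C) :
  compop (@Upow R j) (compop (scaleop c (@P0 R)) (@Upow R (- j))) =
  diagop (fun k => if k == j then c else 0).
Proof.
apply: opext => f k; rewrite /compop /Upow /scaleop /P0 /diagop.
have -> : k - j - - j = k by ring.
case: (eqVneq k j) => [->|nkj]; first by rewrite subrr !eqxx mul1r.
have -> : (k - j == 0) = false by lia.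
by rewrite !mul0r mulr0.
Qed.

Lemma poly_delta (j : int) (c : C) :
  in_poly_alg (diagop (fun k => if k == j then c else 0)).
Proof.
rewrite -delta_eq; apply: pa_comp; first exact: poly_Upow.
apply: pa_comp; last exact: poly_Upow.
by apply: pa_scale; apply: pa_P0.
Qed.

Lemma poly_fin (N : nat) (g : int -> C) :
  (forall k : int, (N < `|k|)%N -> g k = 0) -> in_poly_alg (diagop g).
Proof.
elim: N g => [|N IH] g H.
  have -> : diagop g = diagop (fun k => if k == 0 then g 0 else 0).
    apply: opext => f k; rewrite /diagop.
    case: (eqVneq k 0) => [->//|nz]; rewrite H //; lia.
  exact: poly_delta.
pose g' := fun k : int => if `|k|%N == N.+1 then 0 else g k.
have -> : diagop g = addop (diagop g') (addop
   (diagop (fun k => if k == N.+1%:Z then g N.+1%:Z else 0))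
   (diagop (fun k => if k == - N.+1%:Z then g (- N.+1%:Z) else 0))).
  apply: opext => f k; rewrite /diagop /addop /g'.
  case: (eqVneq k N.+1%:Z) => [->|n1].
    have -> : (N.+1%:Z == - N.+1%:Z) = false by lia.
    have -> : (`|N.+1%:Z|%N == N.+1) = true by lia.
    by rewrite !mul0r ?add0r ?addr0.
  case: (eqVneq k (- N.+1%:Z)) => [->|n2].
    have -> : (`|- N.+1%:Z|%N == N.+1) = true by lia.
    by rewrite !mul0r ?add0r ?addr0.
  case: (eqVneq `|k|%N N.+1) => [e|ne]; first by lia.
  by rewrite !mul0r ?add0r ?addr0.
apply: pa_add; last by apply: pa_add; apply: poly_delta.
apply: IH => k Hk; rewrite /g'.
case: (eqVneq `|k|%N N.+1) => // ne; apply: H; lia.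
Qed.

Lemma poly_diag (a : int -> C) : ecR a -> in_poly_alg (diagop a).
Proof.
move=> /ec_norm [N [cp [cm H]]].
pose g := fun k : int => a k - cm - (cp - cm) * (if 0 <= k then 1 else 0).
have -> : diagop a = addop (scaleop cm (@idop R))
    (addop (scaleop (cp - cm) (@Pge0 R)) (diagop g)).
  apply: opext => f k; rewrite /diagop /addop /scaleop /idop /Pge0 /diagop /g.
  ring.
apply: pa_add; first by apply: pa_scale; apply: pa_id.
apply: pa_add; first by apply: pa_scale; apply: pa_Pge0.
apply: (poly_fin (N := N)) => k Hk; rewrite /g.
case: (lerP 0 k) => Hk0.
  rewrite (proj1 (H k)); last by lia.
  by rewrite mulr1; ring.
rewrite (proj2 (H k)); last by lia.
by rewrite mulr0; ring.
Qed.

Lemma flex_poly l : allec l -> in_poly_alg (flex l).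
Proof.
elim: l => [|p l IH] Hl.
  have -> : flex [::] = scaleop 0 (@idop R).
    by apply: opext => f k; rewrite /flex big_nil /scaleop mul0r.
  by apply: pa_scale; apply: pa_id.
have -> : flex (p :: l) = addop (compop (@Upow R p.1) (diagop p.2)) (flex l).
  by apply: opext => f k; rewrite /flex /addop big_cons.
apply: pa_add; last by apply: IH => q Hq; apply: Hl; right.
apply: pa_comp; first exact: poly_Upow.
by apply: poly_diag; apply: Hl; left.
Qed.

End Proof.

Theorem mainTheorem4 (R : realType) (T : Op R) :
  in_A T <-> in_poly_alg T.
Proof.
split.
  by move=> /A_to_flex [l [Hl ->]]; apply: flex_poly.
by move=> /poly_inF [l [Hl ->]]; apply: flex_to_A.
Qed.
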